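(* Let $p,q\in(0,1)$ and define $$h(p,q)=4p^2q^4-12p^2q^3+12p^2q^2-4p^2q-2pq^4+8pq^3-12pq^2+8pq,$$ which equals $\mathbb{E}^{(1,1)}_{p,q}[Z_1]=\mathbb{E}[\min(U,V)]$ for independent $U\sim\mathrm{Bin}(4,q)$ and $V\sim\mathrm{Bin}(2,p)$. If $h(p,q)>1$, then $\mathbb{P}^{(1,1)}_{p,q}(\tau=+\infty)>0$.
   Context: Cooperative model: for $p,q\in(0,1)$, a Markov chain $(X_n,Y_n)_{n\ge0}$ on $\mathbb{N}^2$ whose transition law from state $(x,y)$ is $\mu_{(x,y)}=\mathrm{Bin}(2,q)^{*(x+y)}\otimes\mathrm{Bin}(2,p)^{*\min(x,y)}$, i.e. given the past, $X_{n+1}\sim\mathrm{Bin}(2(X_n+Y_n),q)$ and $Y_{n+1}\sim\mathrm{Bin}(2\min(X_n,Y_n),p)$ are independent. $\mathbb{P}^{(x,y)}_{p,q}$ (expectation $\mathbb{E}^{(x,y)}_{p,q}$) denotes the law of this process started from $(x,y)$. $Z_n=\min(X_n,Y_n)$ and $\tau=\inf\{n\ge0: Z_n=0\}$. *)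

(* Defs.v *)
From HB Require Import structures.
From mathcomp Require Import all_boot all_order all_algebra.
From mathcomp Require Import all_classical all_reals all_analysis.
Set Implicit Arguments. Unset Strict Implicit. Unset Printing Implicit Defensive.
Import Order.TTheory GRing.Theory Num.Theory.
Local Open Scope ring_scope.

(* Probability mass function of Bin(n, r) at k (zero when k > n, since 'C(n,k) = 0). *)
Definition binom_pmf (R : realType) (n : nat) (r : R) (k : nat) : R :=
  ('C(n, k))%:R * r ^+ k * (1 - r) ^+ (n - k).

Definition coop_kernel (R : realType) (p q : R) (s s' : nat * nat) : R :=
  binom_pmf (2 * (s.1 + s.2)) q s'.1 * binom_pmf (2 * minn s.1 s.2) p s'.2.

Definition hpq (R : realType) (p q : R) : R :=
  4 * p^+2 * q^+4 - 12 * p^+2 * q^+3 + 12 * p^+2 * q^+2 - 4 * p^+2 * q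
  - 2 * p * q^+4 + 8 * p * q^+3 - 12 * p * q^+2 + 8 * p * q.

(* Main.v *)
Require Import Defs.
From HB Require Import structures.
From mathcomp Require Import all_boot all_order all_algebra.
From mathcomp Require Import all_classical all_reals all_analysis.
From mathcomp Require Import ring lra zify.
Import Order.TTheory GRing.Theory Num.Theory.
Local Open Scope classical_set_scope.
Local Open Scope ring_scope.
Set Implicit Arguments. Unset Strict Implicit.

Section B.
Variable R : realType.
Implicit Types (r : R) (f g : nat -> R).

Definition bsum n r f := \sum_(a < n.+1) binom_pmf n r a * f a.

Lemma eq_bsum n r f g : (forall a, f a = g a) -> bsum n r f = bsum n r g.
Proof. by move=> e; apply: eq_bigr => i _; rewrite e. Qed.

Lemma bsum0 r f : bsum 0 r f = f 0%N.
Proof. by rewrite /bsum big_ord1 /binom_pmf bin0 !expr0 !mul1r. Qed.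

Lemma bsum_S n r f :
  bsum n.+1 r f = bsum n r (fun a => (1-r) * f a + r * f a.+1).
Proof.
rewrite /bsum /binom_pmf big_ord_recl /= bin0 subn0 expr0 mulr1.
under eq_bigr => i _ do rewrite binS natrD !mulrDl subSS.
rewrite big_split /= addrA.
under [in RHS]eq_bigr => i _ do rewrite mulrDr.
rewrite big_split /=; congr (_ + _); last first.
  by apply: eq_bigr => i _; rewrite exprS; ring.
rewrite big_ord_recr /= bin_small // !mul0r addr0.
rewrite big_ord_recl /= bin0 subn0 expr0 !mul1r exprS.
congr (_ + _); first ring.
apply: eq_bigr => i _; rewrite /bump /=.
have hi : (i < n)%N := ltn_ord i.
rewrite -(subnSK hi) exprS; ring.
Qed.

Lemma bsum_conv n m r f :
  bsum (n + m) r f = bsum n r (fun a => bsum m r (fun c => f (a + c)%N)).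
Proof.
elim: m f => [|m IH] f.
  by rewrite addn0; apply: eq_bsum => a; rewrite bsum0 addn0.
rewrite addnS bsum_S IH; apply: eq_bsum => a.
by rewrite bsum_S; apply: eq_bsum => c; rewrite addnS.
Qed.

Lemma bsum_const n r c : bsum n r (fun _ => c) = c.
Proof.
elim: n => [|n IH]; first by rewrite bsum0.
by rewrite bsum_S (@eq_bsum _ _ _ (fun _ => c)) // => a; ring.
Qed.

Lemma pmf_ge0 n r a : 0 <= r <= 1 -> 0 <= binom_pmf n r a.
Proof.
move=> /andP[r0 r1]; rewrite /binom_pmf.
by rewrite !mulr_ge0 // exprn_ge0 // subr_ge0.
Qed.

Lemma bsum_le n r f g : 0 <= r <= 1 -> (forall a, f a <= g a) ->
  bsum n r f <= bsum n r g.
Proof.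
move=> hr fg; apply: ler_sum => i _; apply: ler_wpM2l; [exact: pmf_ge0|exact: fg].
Qed.

Lemma bsum_ge0 n r f : 0 <= r <= 1 -> (forall a, 0 <= f a) -> 0 <= bsum n r f.
Proof. by move=> hr h; rewrite -(bsum_const n r 0); apply: bsum_le. Qed.

Lemma bsum_scal n r c f : bsum n r (fun a => c * f a) = c * bsum n r f.
Proof. by rewrite /bsum mulr_sumr; apply: eq_bigr => i _; ring. Qed.

Lemma bsum_subl n r c f : bsum n r (fun a => c - f a) = c - bsum n r f.
Proof.
rewrite -{2}(bsum_const n r c) /bsum -sumrB.
by apply: eq_bigr => i _; ring.
Qed.

Lemma bsum_swap n m r s (F : nat -> nat -> R) :
  bsum n r (fun a => bsum m s (fun b => F a b)) =
  bsum m s (fun b => bsum n r (fun a => F a b)).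
Proof.
rewrite /bsum; under eq_bigr do rewrite mulr_sumr.
rewrite exchange_big /=; apply: eq_bigr => j _; rewrite mulr_sumr.
by apply: eq_bigr => i _; ring.
Qed.

End B.


Section E.
Variable R : realType.
Variables (p q e : R).
Hypotheses (hp : 0 <= p <= 1) (hq : 0 <= q <= 1) (he0 : 0 <= e) (he1 : e <= 1).

Lemma eX_ge0 n : 0 <= e ^+ n.
Proof. exact: exprn_ge0. Qed.

Lemma eX_anti m n : (m <= n)%N -> e ^+ n <= e ^+ m.
Proof. by move=> h; apply: ler_wiXn2l. Qed.

Definition H m := bsum (4 * m) q (fun a => bsum (2 * m) p (fun b => e ^+ minn a b)).

Lemma H_ge0 m : 0 <= H m.
Proof. by apply: bsum_ge0 => // a; apply: bsum_ge0 => // b; apply: eX_ge0. Qed.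

Lemma H_le m : H m <= H 1 ^+ m.
Proof.
elim: m => [|m IH].
  by rewrite /H !muln0 !bsum0 expr0.
have -> : H m.+1 = bsum (4 * m) q (fun a => bsum 4 q (fun u =>
   bsum (2 * m) p (fun b => bsum 2 p (fun v => e ^+ minn (a + u) (b + v))))).
  rewrite /H (_ : (4 * m.+1 = 4 * m + 4)%N); last by lia.
  rewrite bsum_conv; apply: eq_bsum => a; apply: eq_bsum => u.
  by rewrite (_ : (2 * m.+1 = 2 * m + 2)%N) ?bsum_conv //; lia.
apply: (@le_trans _ _ (bsum (4 * m) q (fun a => bsum (2 * m) p (fun b =>
   e ^+ minn a b * H 1)))).
  apply: bsum_le => // a.
  rewrite bsum_swap; apply: bsum_le => // b.
  rewrite /H !muln1 -bsum_scal; apply: bsum_le => // u.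
  rewrite -bsum_scal; apply: bsum_le => // v.
  rewrite -exprD; apply: eX_anti; lia.
rewrite exprS.
under eq_bsum => a do under eq_bsum => b do rewrite mulrC.
under eq_bsum => a do rewrite bsum_scal.
rewrite bsum_scal -/(H m); apply: ler_wpM2l; first exact: H_ge0.
exact: IH.
Qed.

Lemma K_le x y : H 1 <= e ->
  bsum (2 * (x + y)) q (fun a => bsum (2 * minn x y) p (fun b => e ^+ minn a b))
  <= e ^+ minn x y.
Proof.
move=> h1; set z := minn x y.
have -> : (2 * (x + y) = 4 * z + (2 * (x + y) - 4 * z))%N by rewrite /z; lia.
rewrite bsum_conv; apply: (@le_trans _ _ (H z)).
  apply: bsum_le => // a.
  rewrite -[X in _ <= X](bsum_const (2 * (x + y) - 4 * z) q).
  apply: bsum_le => // c; apply: bsum_le => // b; apply: eX_anti; lia.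
apply: (le_trans (H_le z)); apply: lerXn2r => //; rewrite ?nnegrE //.
exact: H_ge0.
Qed.

End E.


Definition P0 (R : realType) (p q : R) : R := 1 - (1 - (1-q)^+4) * (1 - (1-p)^+2).
Definition P2 (R : realType) (p q : R) : R := p^+2 * (1 - (1-q)^+4 - 4 * q * (1-q)^+3).

Lemma H1_eq (R : realType) (p q e : R) :
  H p q e 1 - e = (e - 1) * (P2 p q * e - P0 p q).
Proof.
rewrite /H /bsum /binom_pmf !muln1.
rewrite !big_ord_recr !big_ord0 /= /minn /=.
rewrite (_ : 'C(4,1) = 4)// (_ : 'C(4,2) = 6)// (_ : 'C(4,3) = 4)// (_ : 'C(4,4) = 1)//.
rewrite (_ : 'C(2,1) = 2)// (_ : 'C(2,2) = 1)// !bin0.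
rewrite /P0 /P2; ring.
Qed.


Section Prob.
Variables (R : realType) (p q e : R).
Hypotheses (hp : 0 <= p <= 1) (hq : 0 <= q <= 1) (he0 : 0 <= e) (he1 : e <= 1)
  (hH : H p q e 1 <= e).
Variables (d : measure_display) (T : measurableType d) (P : probability T R)
  (X Y : nat -> T -> nat).
Hypotheses (hX : forall n k, measurable [set w | X n w = k])
  (hY : forall n k, measurable [set w | Y n w = k]).

Definition wt k (t : nat -> nat * nat) : R := (if t 0%N == (1%N, 1%N) then 1 else 0)
         * \prod_(i < k) coop_kernel p q (t i) (t i.+1).

Hypothesis hlaw : forall (n : nat) (s : nat -> nat * nat),
     P [set w | forall i, (i <= n)%N -> (X i w, Y i w) = s i] = (wt n s)%:E.

Definition Cyl k (t : nat -> nat * nat) := [set w | forall i, (i <= k)%N -> (X i w, Y i w) = t i].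
Definition Dj k j := [set w | forall i, (k < i <= k + j)%N -> (0 < minn (X i w) (Y i w))%N].
Definition Zp i := [set w | (0 < minn (X i w) (Y i w))%N].
Definition gg (s : nat * nat) : R := 1 - e ^+ minn s.1 s.2.

Lemma mforall (F : nat -> T -> Prop) :
  (forall i, measurable [set w | F i w]) -> measurable [set w | forall i, F i w].
Proof.
move=> h; have -> : [set w | forall i, F i w] = \bigcap_i [set w | F i w].
  by apply/seteqP; split => w /= hw i; [move=> _; exact: hw | exact: hw].
exact: bigcapT_measurable.
Qed.

Lemma mimp (b : bool) (Q : T -> Prop) :
  measurable [set w | Q w] -> measurable [set w | b -> Q w].
Proof.
case: b => h.
  by have -> : [set w | true -> Q w] = [set w | Q w] by apply/seteqP; split => w /=; auto.
by have -> : [set w | false -> Q w] = setT by apply/seteqP; split => w /=.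
Qed.

Lemma mpair i (s : nat * nat) : measurable [set w | (X i w, Y i w) = s].
Proof.
case: s => a b.
have -> : [set w | (X i w, Y i w) = (a, b)] = [set w | X i w = a] `&` [set w | Y i w = b].
  by apply/seteqP; split => w /=; [case => -> ->| case => -> ->].
exact: measurableI.
Qed.

Lemma mZp i : measurable (Zp i).
Proof.
have -> : Zp i = ~` ([set w | X i w = 0%N] `|` [set w | Y i w = 0%N]).
  apply/seteqP; split => w; rewrite /Zp /=.
    by move=> h [] h0; lia.
  move=> h; have [h1 h2] : X i w <> 0%N /\ Y i w <> 0%N.
    by split => h0; apply: h; [left|right].
  lia.
by apply: measurableC; apply: measurableU.
Qed.

Lemma mCyl k t : measurable (Cyl k t).
Proof. by apply: mforall => i; apply: mimp; apply: mpair. Qed.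

Lemma mDj k j : measurable (Dj k j).
Proof. by apply: mforall => i; apply: mimp; apply: mZp. Qed.


Lemma wt_ge0 k t : 0 <= wt k t.
Proof. by rewrite -lee_fin -hlaw; apply: measure_ge0. Qed.

Lemma gg_le1 s : gg s <= 1.
Proof. by rewrite /gg lerBlDr lerDl exprn_ge0. Qed.

Definition tup (t : nat -> nat * nat) k a b :=
  fun i => if i == k.+1 then (a, b) else t i.

Lemma wt_step k t a b : wt k.+1 (tup t k a b) =
  wt k t * (binom_pmf (2 * ((t k).1 + (t k).2)) q a *
            binom_pmf (2 * minn (t k).1 (t k).2) p b).
Proof.
rewrite /wt big_ord_recr /= /tup /= eqxx.
have -> : (k == k.+1) = false by apply/negbTE; rewrite neq_ltn ltnSn.
rewrite -mulrA; congr (_ * (_ * _)).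
apply: eq_bigr => i _.
have hi : (i < k)%N := ltn_ord i.
have -> : (nat_of_ord i == k.+1) = false by apply/negbTE; rewrite neq_ltn; apply/orP; left; lia.
by have -> : (i.+1 == k.+1) = false by apply/negbTE; rewrite neq_ltn; apply/orP; left; lia.
Qed.

Lemma big_sub (n : nat) (F : nat -> set T) (S : set T) :
  (forall i, (i < n)%N -> F i `<=` S) -> \big[setU/set0]_(i < n) F i `<=` S.
Proof.
move=> h; apply: (big_ind (fun A => A `<=` S)) => //.
  by move=> A B hA hB x [/hA|/hB].
by move=> i _; apply: h.
Qed.

Lemma main j : forall k t, (((wt k t) * gg (t k))%:E <= P (Cyl k t `&` Dj k j))%E.
Proof.
elim: j => [|j IH] k t.
  apply: (@le_trans _ _ (P (Cyl k t))).
    rewrite /Cyl hlaw lee_fin -[X in _ <= X]mulr1.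
    by apply: ler_wpM2l; [exact: wt_ge0|exact: gg_le1].
  apply: le_measure; rewrite ?inE; [exact: mCyl|exact: measurableI (mCyl _ _) (mDj _ _)|].
  by move=> w hw; split => // i; lia.
set N := (2 * ((t k).1 + (t k).2))%N.
set M := (2 * minn (t k).1 (t k).2)%N.
pose Hab a b := Cyl k.+1 (tup t k a b) `&` Dj k.+1 j `&` Zp k.+1.
pose G a := \big[setU/set0]_(b < M.+1) Hab a b.
have mH a b : measurable (Hab a b).
  by apply: measurableI; [apply: measurableI; [exact: mCyl|exact: mDj]|exact: mZp].
have mG a : measurable (G a) by apply: bigsetU_measurable => b _.
have HX a b : Hab a b `<=` [set w | X k.+1 w = a /\ Y k.+1 w = b].
  move=> w [[hw _] _]; have := hw k.+1 (leqnn _).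
  by rewrite /tup eqxx => -[h1 h2]; split.
have GX a : G a `<=` [set w | X k.+1 w = a].
  by apply: big_sub => b _ w /HX [].
apply: (@le_trans _ _ (P (\big[setU/set0]_(a < N.+1) G a))); last first.
  apply: le_measure; rewrite ?inE.
  - by apply: bigsetU_measurable.
  - exact: measurableI (mCyl _ _) (mDj _ _).
  apply: big_sub => a _; apply: big_sub => b _ w [[hw hd] hz]; split.
    move=> i hi; have := hw i (leqW hi); rewrite /tup.
    by have -> : (i == k.+1) = false by apply/negbTE; rewrite neq_ltn; apply/orP; left; lia.
  move=> i hi; have [->|hne] := eqVneq i k.+1; first exact: hz.
  by apply: hd; lia.
rewrite measure_bigsetU //; last first.
  by move=> a a' _ _ [w [/GX /= h1 /GX /= h2]]; rewrite -h1 -h2.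
apply: (@le_trans _ _ ((\sum_(a < N.+1) \sum_(b < M.+1)
   ((wt k.+1 (tup t k a b)) * gg (nat_of_ord a, nat_of_ord b))%:E)%E)); last first.
  apply: lee_sum => a _.
  rewrite /G measure_bigsetU //; last first.
    by move=> b b' _ _ [w [/HX /= [_ h1] /HX /= [_ h2]]]; rewrite -h1 -h2.
  apply: lee_sum => b _.
  have [hm|hm] := boolP (0 < minn a b)%N.
    have e1 : tup t k a b k.+1 = (nat_of_ord a, nat_of_ord b) by rewrite /tup eqxx.
    have := IH k.+1 (tup t k a b); rewrite e1 => h; apply: (le_trans h).
    apply: le_measure; rewrite ?inE //.
    - exact: measurableI (mCyl _ _) (mDj _ _).
    move=> w [hw hd]; split => //.
    by rewrite /Zp /=; have := hw k.+1 (leqnn _); rewrite /tup eqxx => -[-> ->].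
  have -> : gg (nat_of_ord a, nat_of_ord b) = 0.
    by rewrite /gg /=; move: hm; rewrite lt0n negbK => /eqP ->; rewrite expr0 subrr.
  by rewrite mulr0 measure_ge0.
under eq_bigr => a _ do rewrite sumEFin.
rewrite sumEFin lee_fin.
under eq_bigr => a _ do under eq_bigr => b _ do rewrite wt_step.
have -> : \sum_(a < N.+1) \sum_(b < M.+1)
    wt k t * (binom_pmf N q a * binom_pmf M p b) * gg (nat_of_ord a, nat_of_ord b) =
  wt k t * bsum N q (fun a => bsum M p (fun b => gg (a, b))).
  rewrite /bsum mulr_sumr; apply: eq_bigr => a _.
  rewrite mulr_sumr mulr_sumr; apply: eq_bigr => b _; ring.
apply: ler_wpM2l; first exact: wt_ge0.
rewrite /gg.
under eq_bsum => a do rewrite bsum_subl.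
rewrite bsum_subl lerD2l lerN2.
exact: K_le.
Qed.

End Prob.


Unset Implicit Arguments.
Set Strict Implicit.
Theorem mainTheorem16 (R : realType) (p q : R)
  (hp : 0 < p < 1) (hq : 0 < q < 1)
  (d : measure_display) (T : measurableType d) (P : probability T R)
  (X Y : nat -> T -> nat)
  (hX : forall n k, measurable [set w | X n w = k])
  (hY : forall n k, measurable [set w | Y n w = k])
  (hlaw : forall (n : nat) (s : nat -> nat * nat),
     P [set w | forall i, (i <= n)%N -> (X i w, Y i w) = s i]
     = ((if s 0%N == (1%N, 1%N) then 1 else 0)
         * \prod_(i < n) coop_kernel p q (s i) (s i.+1))%:E)
  (hh : 1 < hpq p q) :
  (0 < P [set w | forall n, (0 < minn (X n w) (Y n w))%N])%E.
Proof.
have hp' : 0 <= p <= 1 by case/andP: hp => h1 h2; rewrite !ltW.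
have hq' : 0 <= q <= 1 by case/andP: hq => h1 h2; rewrite !ltW.
have hdiff : hpq p q - 1 = P2 p q - P0 p q by rewrite /hpq /P2 /P0; ring.
have hlt : P0 p q < P2 p q by rewrite -subr_gt0 -hdiff subr_gt0.
have hP0 : 0 <= P0 p q.
  case/andP: hp => p0 p1; case/andP: hq => q0 q1.
  have a0 : 0 <= (1 - q) ^+ 4 by apply: exprn_ge0; lra.
  have a1 : (1 - q) ^+ 4 <= 1 by apply: exprn_ile1; lra.
  have b0 : 0 <= (1 - p) ^+ 2 by apply: exprn_ge0; lra.
  have b1 : (1 - p) ^+ 2 <= 1 by apply: exprn_ile1; lra.
  rewrite /P0 subr_ge0; apply: mulr_ile1; lra.
have hP2 : 0 < P2 p q by apply: le_lt_trans hlt.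
set e := P0 p q / P2 p q.
have he0 : 0 <= e by rewrite /e divr_ge0 // ltW.
have he1 : e < 1 by rewrite /e ltr_pdivrMr // mul1r.
have hH : H p q e 1 <= e.
  have := H1_eq p q e.
  have -> : P2 p q * e - P0 p q = 0 by rewrite /e mulrC divfK ?subrr // gt_eqF.
  by rewrite mulr0 => /eqP; rewrite subr_eq0 => /eqP ->.
pose t0 := fun _ : nat => (1%N, 1%N).
pose F := fun j => Cyl X Y 0 t0 `&` Dj X Y 0 j.
have mF j : measurable (F j) by apply: measurableI; [exact: (mCyl hX hY)|exact: (mDj hp' hq' he0 (ltW he1) hH hX hY)].
have lb j : ((1 - e)%:E <= P (F j))%E.
  have := main hp' hq' he0 (ltW he1) hH hX hY hlaw j 0 t0.
  rewrite /wt /t0 /gg big_ord0 eqxx mulr1 mul1r.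
  by have -> : minn (1%N, 1%N).1 (1%N, 1%N).2 = 1%N by []; rewrite expr1.
have dec : nonincreasing_seq F.
  move=> n m nm; rewrite subsetEset => w [hc hd]; split => // i hi; apply: hd.
  by case/andP: hi => h1 h2; rewrite h1 /= (leq_trans h2) // leq_add2l.
have mI : measurable (\bigcap_n F n) by apply: bigcapT_measurable.
have fin : (P (F 0%N) < +oo)%E.
  by apply: (le_lt_trans (probability_le1 P (mF 0%N))); rewrite ltey.
have cv := nonincreasing_cvg_mu fin mF mI dec.
have lbI : ((1 - e)%:E <= P (\bigcap_n F n))%E.
  rewrite -(cvg_lim _ cv) //; apply: lime_ge; first exact: cvgP cv.
  by apply: nearW => n; exact: lb.
have msub : measurable [set w | forall n, (0 < minn (X n w) (Y n w))%N].
  by apply: mforall => i; apply: (mZp hp' hq' he0 (ltW he1) hH hX hY).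
apply: (lt_le_trans _ (le_trans lbI _)); first by rewrite lte_fin subr_gt0.
apply: le_measure; rewrite ?inE //.
move=> w hw n; case: n => [|n].
  have [hc _] := hw 0%N I; have := hc 0%N (leqnn _); rewrite /t0 => -[-> ->] //.
have [_ hd] := hw n.+1 I; apply: hd; by rewrite /= add0n leqnn.
Qed.
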